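(* Let $A$ be a finite additive poset, let $\mu:A\times A\to\mathbb{Z}$ be the Möbius function of its partial order, and let $\mathcal{A}\subset A$ be the set of atoms of $A$. Then every $a\in A$ satisfies $a=\sum_{b\in\mathcal{A}}\mu(b,a)\,b$ (integer coefficients acting on the $\mathbb{Z}/2\mathbb{Z}$-vector space $A$).
   Context: An additive poset is a pair $(A,\le)$ where $A$ is an abelian group and $\le$ is a partial order on $A$ such that for all $a,b,c\in A$: $(\ast)$ if $b\le a$ and $c\le a$ then $b+c\le a$; $(\ast\ast)$ if $a\le b$ and $a\le c$ then $a\le a+b+c$. Every element satisfies $a+a=0$. An atom is a nonzero $a$ whose tail $\{x:x\le a\}$ equals $\{0,a\}$. The Möbius function is determined by $\mu(a,a)=1$, $\mu(a,b)=0$ if $a\not\le b$, and $\sum_{a\le c\le b}\mu(a,c)=0$ if $a\le b$, $a\neq b$. *)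

(* Defs.v *)
From HB Require Import structures.
From mathcomp Require Import all_boot all_order all_algebra.
Set Implicit Arguments. Unset Strict Implicit. Unset Printing Implicit Defensive.
Import GRing.Theory.
Local Open Scope ring_scope.

Definition additive_poset (A : zmodType) (le : rel A) : Prop :=
  [/\ (forall a, le a a),
      (forall a b, le a b -> le b a -> a = b),
      (forall a b c, le a b -> le b c -> le a c),
      (forall a b c, le b a -> le c a -> le (b + c) a)
    & (forall a b c, le a b -> le a c -> le a (a + b + c))].

Definition is_atom (A : finZmodType) (le : rel A) (a : A) : bool :=
  (a != 0) && [forall x : A, le x a == ((x == 0) || (x == a))].

(* The defining equations of the Moebius function of a finite poset;
   on a finite poset they determine mu uniquely. *)
Definition is_moebius (A : finType) (le : rel A) (mu : A -> A -> int) : Prop :=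
  [/\ (forall a, mu a a = 1),
      (forall a b, ~~ le a b -> mu a b = 0)
    & (forall a b, le a b -> a != b ->
         \sum_(c : A | le a c && le c b) mu a c = 0)].

(* Main.v *)
Require Import Defs.
From HB Require Import structures.
From mathcomp Require Import all_boot all_order all_algebra zify.
Import GRing.Theory.
Local Open Scope ring_scope.

Section Aux.
Variable A : finZmodType.

Lemma pair_sum (c : A) (s : A -> A) n (P : {set A}) :
  (#|P| <= n)%N ->
  (forall t, t \in P -> [/\ s t \in P, s t != t, s (s t) = t & t + s t = c]) ->
  \sum_(t in P) t = c *+ (#|P|./2).
Proof.
elim: n P => [|n IH] P hn hP.
  move: hn; rewrite leqn0 cards_eq0 => /eqP ->.
  by rewrite big_set0 cards0.
have [-> | [t tP]] := set_0Vmem P; first by rewrite big_set0 cards0.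
have [stP nst sst tst] := hP t tP.
set P' := P :\ t :\ s t.
have cP : #|P| = (#|P'| + 2)%N.
  rewrite /P' (cardsD1 t P) (cardsD1 (s t) (P :\ t)) !inE nst stP tP /=.
  rewrite /=; lia.
rewrite (bigD1 t) //= (bigD1 (s t)) /=; last by rewrite nst stP.
have -> : \sum_(i | (i \in P) && (i != t) && (i != s t)) i = \sum_(i in P') i.
  by apply: eq_bigl => i; rewrite /P' !inE; case: (i \in P); case: (i != t); case: (i != s t).
rewrite addrA tst IH; last first.
- move=> u; rewrite /P' !inE => /and3P [ust ut uP].
  have [suP nsu ssu tsu] := hP u uP.
  split => //.
  rewrite suP andbT; apply/andP; split.
    by apply: contra ut => /eqP h; rewrite -ssu h sst.
  by apply: contra ust => /eqP h; rewrite -h ssu.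
- by move: hn; rewrite cP addn2 ltnS; apply: leq_trans; rewrite leqnSn.
by rewrite cP addn2 /= -mulrS.
Qed.

Lemma mulrn_2tors (y : A) k : y + y = 0 -> y *+ k = if odd k then y else 0.
Proof.
move=> yy; elim: k => [|k IH]; first by rewrite mulr0n.
rewrite mulrS IH /=; case: (odd k) => /=; by rewrite ?yy ?addr0.
Qed.

End Aux.

Section Main.
Variable A : finZmodType.
Variable le : rel A.
Hypothesis hA : additive_poset le.

Lemma twice (a : A) : a + a = 0.
Proof.
case: hA => r an tr s ss.
have h1 : le (a + a) a by apply: s; apply: r.
have h2 : le (a + a + a) a by apply: s => //; apply: r.
have h3 : le a (a + a + a) by apply: ss; apply: r.
apply: (addIr a); rewrite add0r; exact: an h2 h3.
Qed.

Lemma le0 (a : A) : le 0 a.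
Proof.
case: hA => r an tr s ss.
rewrite -(twice a); apply: s; apply: r.
Qed.

Lemma tail_sum (b : A) :
  \sum_(c | le c b) c = if is_atom le b then b else 0.
Proof.
case: hA => r an tr s ss.
case ab: (is_atom le b).
  move: ab => /andP [b0 /forallP H].
  have -> : \sum_(c | le c b) c = \sum_(c | (c == 0) || (c == b)) c.
    by apply: eq_bigl => c; apply/eqP; apply: H.
  rewrite (bigD1 b) /=; last by rewrite eq_refl orbT.
  rewrite (bigD1 0) /=; last by rewrite eq_refl eq_sym b0.
  rewrite big1 ?addr0 // => c /andP [/andP [h cb] c0].
  by case/orP: h => /eqP ?; subst; rewrite eqxx in cb c0.
have [->|b0] := eqVneq b 0.
  rewrite (bigD1 0) ?le0 //= big1 ?addr0 // => c /andP [cb c0].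
  exact: an cb (le0 c).
move: ab; rewrite /is_atom b0 /= => /negbT; rewrite negb_forall => /existsP [x].
have [->|x0] := eqVneq x 0; first by rewrite le0.
have [->|xb] := eqVneq x b; first by rewrite r.
case lx: (le x b) => // _.
set T := [set c | le c b].
have -> : \sum_(c | le c b) c = \sum_(c in T) c by apply: eq_bigl => c; rewrite inE.
have PT : forall y, le y b -> y != 0 -> \sum_(c in T) c = y *+ (#|T|./2).
  move=> y yb y0; apply: (@pair_sum A y (fun t => t + y) #|T| T (leqnn _)).
  move=> t; rewrite !inE => tb; split.
  - exact: s.
  - by rewrite -[X in _ != X]addr0 (inj_eq (@addrI _ t)).
  - by rewrite -addrA twice addr0.
  - by rewrite addrA twice add0r.
have e := PT b (r b) b0; rewrite (PT x lx x0) in e *.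
move: e; rewrite !mulrn_2tors ?twice //.
by case: (odd _) => // /eqP; rewrite (negbTE xb).
Qed.

Variable mu : A -> A -> int.
Hypothesis hm : is_moebius le mu.

Lemma left_moeb x y : \sum_c mu x c * (le c y)%:R = (x == y)%:R.
Proof.
case: hA => r an tr s ss; case: hm => m1 m0 msum.
case lxy: (le x y); last first.
  have -> : (x == y) = false by apply/negbTE; apply: contraFN lxy => /eqP ->.
  apply: big1 => c _; case lc: (le c y); last by rewrite mulr0.
  rewrite m0 ?mul0r //; apply: contraFN lxy => h; exact: tr h lc.
have -> : \sum_c mu x c * (le c y)%:R = \sum_(c | le x c && le c y) mu x c.
  rewrite [RHS]big_mkcond; apply: eq_bigr => c _.
  case lc: (le c y); case lx: (le x c) => /=; rewrite ?mulr1 ?mulr0 //.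
  by rewrite m0 ?lx.
have [<-|nxy] := eqVneq x y; last by rewrite msum.
rewrite (bigD1 x) /=; last by rewrite r.
rewrite big1 ?addr0 ?m1 // => c /andP [/andP [h1 h2] h3].
by move: h3; rewrite (an _ _ h2 h1) eqxx.
Qed.

Lemma sumA (F : A -> int) : \sum_(k : 'I_#|A|) F (enum_val k) = \sum_(x : A) F x.
Proof.
by rewrite [RHS](reindex (fun k : 'I_#|A| => enum_val k)) //; apply: onW_bij; exact: enum_val_bij.
Qed.

Lemma right_moeb x y : \sum_c (le x c)%:R * mu c y = (x == y)%:R :> int.
Proof.
pose M : 'M[int]_#|A| := \matrix_(i, j) mu (enum_val i) (enum_val j).
pose Z : 'M[int]_#|A| := \matrix_(i, j) ((le (enum_val i) (enum_val j))%:R : int).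
have MZ : M *m Z = 1%:M.
  apply/matrixP => i j; rewrite !mxE.
  under eq_bigr => k _ do rewrite !mxE.
  rewrite (sumA (fun k => mu (enum_val i) k * (le k (enum_val j))%:R)).
  by rewrite left_moeb (inj_eq enum_val_inj).
have := mulmx1C MZ => /matrixP /(_ (enum_rank x) (enum_rank y)).
rewrite !mxE (inj_eq enum_rank_inj) => <-.
under [RHS]eq_bigr => k _ do rewrite !mxE enum_rankK.
by rewrite (sumA (fun k => (le x k)%:R * mu k (enum_val (enum_rank y)))) enum_rankK.
Qed.

End Main.

Theorem theorem6p1 (A : finZmodType) (le : rel A) (mu : A -> A -> int) :
  additive_poset le -> is_moebius le mu ->
  forall a : A,
    a = \sum_(b : A | is_atom le b) b *~ mu b a.
Proof.
move=> hA hm a.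
rewrite big_mkcond /=.
have E : forall b, (if is_atom le b then b *~ mu b a else 0)
    = \sum_c (if le c b then c *~ mu b a else 0).
  move=> b; rewrite -big_mkcond -mulrz_suml tail_sum //.
  by case: ifP; rewrite ?mul0rz.
rewrite (eq_bigr _ (fun b _ => E b)) exchange_big /=.
have F : forall c, \sum_b (if le c b then c *~ mu b a else 0) = c *~ (c == a)%:R.
  move=> c; rewrite -(right_moeb A le hA mu hm) mulrz_sumr; apply: eq_bigr => b _.
  by case: (le c b); rewrite /= ?mul1r ?mul0r ?mulr0z.
rewrite (eq_bigr _ (fun c _ => F c)) (bigD1 a) //= eqxx big1 ?addr0 //.
by move=> c /negbTE ->; rewrite mulr0z.
Qed.
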